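(* With $D$, $K$, $\star$, $D_1=D[X]$, $\mathcal S_1^\star$ and $[\star]$ as defined in the context, for every $E\in\overline{\boldsymbol F}(D)$: (c) $(ED[X])^{[\star]}\cap K=ED_1[Y]_{\mathcal S_1^\star}\cap K=E^{\widetilde\star}$; (d) $(ED[X])^{[\star]}=E^{\widetilde\star}D[X]$.
   Context: $D$ is an integral domain with quotient field $K$, $X,Y$ indeterminates, $\star$ a semistar operation on $D$, $D_1:=D[X]$, $K_1:=K(X)$. $\overline{\boldsymbol F}(A)$ is the set of nonzero $A$-submodules of the quotient field of $A$. A semistar operation on $A$ is a map $\star:\overline{\boldsymbol F}(A)\to\overline{\boldsymbol F}(A)$ with $(xE)^\star=xE^\star$ for nonzero $x$ in the quotient field, $E\subseteq F\Rightarrow E^\star\subseteq F^\star$, $E\subseteq E^\star$, $(E^\star)^\star=E^\star$. $E^{\star_f}=\bigcup\{F^\star\mid F\subseteq E,\ F$ nonzero finitely generated fractional ideal$\}$. A nonzero ideal $I$ is a quasi-$\star$-ideal if $I^\star\cap D=I$; $\mathrm{QMax}^\star(D)$ is the set of maximal elements among proper quasi-$\star$-ideals; $E^{\widetilde\star}=\bigcap\{ED_P\mid P\in\mathrm{QMax}^{\star_f}(D)\}$. $\boldsymbol\Delta_1^\star:=\{Q_1\in\mathrm{Spec}(D_1)\mid Q_1\cap D=(0),\ \text{or } Q_1=(Q_1\cap D)[X]\text{ and }(Q_1\cap D)^{\star_f}\subsetneq D^\star\}$; $\mathcal S_1^\star:=D_1[Y]\setminus\bigcup\{Q_1[Y]\mid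 Q_1\in\boldsymbol\Delta_1^\star\}$; $[\star]$ is the semistar operation on $D_1$ given by $E^{[\star]}:=E[Y]_{\mathcal S_1^\star}\cap K_1$ (for $E\in\overline{\boldsymbol F}(D_1)$), where $E[Y]_{\mathcal S_1^\star}$ is the $D_1[Y]_{\mathcal S_1^\star}$-submodule of $K(X,Y)$ generated by $E$. *)

(* Defs.v *)
From HB Require Import structures.
From mathcomp Require Import all_boot all_order all_algebra.
From mathcomp Require Import fraction.
Set Implicit Arguments. Unset Strict Implicit. Unset Printing Implicit Defensive.
Import GRing.Theory.
Local Open Scope ring_scope.

Notation "x %:F" := (@FracField.tofrac _ x) : ring_scope.

Definition subs (T : Type) (A B : T -> Prop) := forall x, A x -> B x.
Definition seteq (T : Type) (A B : T -> Prop) := forall x, A x <-> B x.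

Definition gen_mod (F : fieldType) (A E : F -> Prop) : F -> Prop :=
  fun x => exists (n : nat) (e a : 'I_n -> F),
    (forall i, E (e i)) /\ (forall i, A (a i)) /\ x = \sum_(i < n) e i * a i.

Definition img (T U : Type) (f : T -> U) (E : T -> Prop) : U -> Prop :=
  fun y => exists x, E x /\ y = f x.

Definition scale_set (F : fieldType) (x : F) (E : F -> Prop) : F -> Prop :=
  fun y => exists e, E e /\ y = x * e.

Section Base.
Variable D : idomainType.

Definition KK := {fraction D}.
Definition inD (x : KK) : Prop := exists d : D, x = d%:F.

Definition is_Dmod (E : KK -> Prop) : Prop :=
  E 0 /\ (forall x y, E x -> E y -> E (x + y)) /\
  (forall (d : D) x, E x -> E (d%:F * x)).

Definition Fbar (E : KK -> Prop) : Prop := is_Dmod E /\ exists x, E x /\ x != 0.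

Definition semistar (star : (KK -> Prop) -> (KK -> Prop)) : Prop :=
  (forall E, Fbar E -> Fbar (star E)) /\
  (forall E (x : KK), Fbar E -> x != 0 -> seteq (star (scale_set x E)) (scale_set x (star E))) /\
  (forall E G, Fbar E -> Fbar G -> subs E G -> subs (star E) (star G)) /\
  (forall E, Fbar E -> subs E (star E)) /\
  (forall E, Fbar E -> seteq (star (star E)) (star E)).

Definition fg_span (l : seq KK) : KK -> Prop :=
  fun x => exists c : 'I_(size l) -> D, x = \sum_(i < size l) (c i)%:F * l`_i.

Definition nz_fg_frac (G : KK -> Prop) : Prop :=
  exists l : seq KK, seteq G (fg_span l) /\ exists x, G x /\ x != 0.

Definition star_f (star : (KK -> Prop) -> (KK -> Prop)) (E : KK -> Prop) : KK -> Prop :=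
  fun x => exists G, nz_fg_frac G /\ subs G E /\ star G x.

Definition is_ideal (I : KK -> Prop) : Prop := subs I inD /\ is_Dmod I.

Definition quasi_ideal (sf : (KK -> Prop) -> (KK -> Prop)) (I : KK -> Prop) : Prop :=
  is_ideal I /\ (exists x, I x /\ x != 0) /\
  seteq (fun x => sf I x /\ inD x) I.

Definition proper (I : KK -> Prop) : Prop := ~ I 1.

Definition QMax (star : (KK -> Prop) -> (KK -> Prop)) (P : KK -> Prop) : Prop :=
  quasi_ideal (star_f star) P /\ proper P /\
  forall Q, quasi_ideal (star_f star) Q -> proper Q -> subs P Q -> subs Q P.

Definition loc (P : KK -> Prop) : KK -> Prop :=
  fun x => exists d s : D, ~ P s%:F /\ x = d%:F / s%:F.

Definition star_tilde (star : (KK -> Prop) -> (KK -> Prop)) (E : KK -> Prop) : KK -> Prop :=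
  fun x => forall P, QMax star P -> gen_mod (loc P) E x.

Definition K1 := {fraction {poly KK}}.
Definition emb1 (c : KK) : K1 := (c%:P)%:F.
Definition inD1 (f : K1) : Prop :=
  exists p : {poly KK}, f = p%:F /\ forall i, inD p`_i.

Definition K2 := {fraction {poly K1}}.
Definition emb2 (f : K1) : K2 := (f%:P)%:F.
Definition polyY (A : K1 -> Prop) : K2 -> Prop :=
  fun z => exists q : {poly K1}, z = q%:F /\ forall i, A q`_i.

Definition is_prime1 (Q : K1 -> Prop) : Prop :=
  subs Q inD1 /\ Q 0 /\ (forall x y, Q x -> Q y -> Q (x + y)) /\
  (forall a x, inD1 a -> Q x -> Q (a * x)) /\ ~ Q 1 /\
  (forall a b, inD1 a -> inD1 b -> Q (a * b) -> Q a \/ Q b).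

Definition contr (Q : K1 -> Prop) : KK -> Prop := fun c => inD c /\ Q (emb1 c).

Definition Delta1 (star : (KK -> Prop) -> (KK -> Prop)) (Q : K1 -> Prop) : Prop :=
  is_prime1 Q /\
  ((forall c, contr Q c -> c = 0) \/
   (seteq Q (fun f => exists p : {poly KK}, f = p%:F /\ forall i, contr Q p`_i) /\
    subs (star_f star (contr Q)) (star inD) /\
    ~ seteq (star_f star (contr Q)) (star inD))).

Definition S1 (star : (KK -> Prop) -> (KK -> Prop)) : K2 -> Prop :=
  fun z => polyY inD1 z /\ forall Q, Delta1 star Q -> ~ polyY Q z.

Definition locY (star : (KK -> Prop) -> (KK -> Prop)) : K2 -> Prop :=
  fun z => exists a s, polyY inD1 a /\ S1 star s /\ z = a / s.

(* E^{[star]} = E[Y]_{S1} cap K1, for E a subset of K1 *)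
Definition bracket (star : (KK -> Prop) -> (KK -> Prop)) (E : K1 -> Prop) : K1 -> Prop :=
  fun f => gen_mod (locY star) (img emb2 E) (emb2 f).

End Base.

(* Main.v *)
Require Import Defs.
From HB Require Import structures.
From mathcomp Require Import all_boot all_order all_algebra.
From mathcomp Require Import fraction generic_quotient.
From Stdlib Require Import ClassicalEpsilon FunctionalExtensionality PropExtensionality Classical.
Set Implicit Arguments. Unset Strict Implicit. Unset Printing Implicit Defensive.
Import GRing.Theory.
Local Open Scope ring_scope.
Lemma seteq_eq T (A B : T -> Prop) : seteq A B -> A = B.
Proof.
move=> h; apply: functional_extensionality => x; apply: propositional_extensionality; exact: h.
Qed.
Lemma fracE (R : idomainType) (x : {fraction R}) :
  exists n d : R, d != 0 /\ x = n%:F / d%:F.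
Proof.
have: exists n d : R, d != 0 /\ x * d%:F = n%:F.
  elim/quotW: x => y.
  exists \n_y, \d_y; split; first exact: denom_ratioP.
  rewrite -[_ * _]/(FracField.mul _ _) !piE; apply/eqmodP; rewrite /= FracField.equivfE.
  rewrite /FracField.mulf !numden_Ratio ?oner_eq0 ?mulf_neq0 ?denom_ratioP //.
  by rewrite !mulr1 mulrC. by apply: oner_neq0. by apply: oner_neq0.
case=> n [d [dn H]]; exists n, d; split=> //.
by rewrite -H mulfK // tofrac_eq0.
Qed.
Section GenMod.
Variable F : fieldType.
Implicit Types A E S : F -> Prop.

Lemma gm0 A E : gen_mod A E 0.
Proof.
exists 0%N, (fun _ => 0), (fun _ => 0); split; first by move=> [].
by split; [move=> []|rewrite big_ord0].
Qed.

Lemma gm_base A E e a : E e -> A a -> gen_mod A E (e * a).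
Proof.
move=> he ha; exists 1%N, (fun _ => e), (fun _ => a); split=> //; split=> //.
by rewrite big_ord1.
Qed.

Lemma gmD A E x y : gen_mod A E x -> gen_mod A E y -> gen_mod A E (x + y).
Proof.
move=> [n [e [a [He [Ha ->]]]]] [m [e' [a' [He' [Ha' ->]]]]].
exists (n + m)%N, (fun i => match split i with inl j => e j | inr j => e' j end),
  (fun i => match split i with inl j => a j | inr j => a' j end).
split; first by move=> i; case: (split i).
split; first by move=> i; case: (split i).
rewrite big_split_ord /=; congr (_ + _); apply: eq_bigr => i _.
  by have -> : split (lshift m i) = inl i by exact: (unsplitK (inl i)).
by have -> : split (rshift n i) = inr i by exact: (unsplitK (inr i)).
Qed.

Lemma gm_ind A E (S : F -> Prop) : S 0 -> (forall x y, S x -> S y -> S (x + y)) ->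
  (forall e a, E e -> A a -> S (e * a)) -> forall x, gen_mod A E x -> S x.
Proof.
move=> S0 SD Sb x [n [e [a [He [Ha ->]]]]].
by apply: (big_ind S) => // i _; apply: Sb.
Qed.

Lemma gm_mulr A E x b : (forall a, A a -> A (a * b)) -> gen_mod A E x -> gen_mod A E (x * b).
Proof.
move=> Ab; apply: (gm_ind (S := fun x => gen_mod A E (x * b))) => [|u v hu hv|e a he ha]; first by rewrite mul0r; apply: gm0.
  by rewrite mulrDl; apply: gmD.
by rewrite -mulrA; apply: gm_base => //; apply: Ab.
Qed.

Lemma gm_mono A A' E E' x : (forall a, A a -> A' a) -> (forall e, E e -> E' e) ->
  gen_mod A E x -> gen_mod A' E' x.
Proof.
move=> hA hE; apply: (gm_ind (S := gen_mod A' E')) => [|u v|e a he ha]; [exact: gm0|exact: gmD|].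
by apply: gm_base; auto.
Qed.

End GenMod.
Section FG.
Variable D : idomainType.
Local Notation K := (KK D).
Implicit Types (E S G : K -> Prop) (l : seq K).

Lemma Dmod0 S : is_Dmod S -> S 0. Proof. by case. Qed.
Lemma DmodD S x y : is_Dmod S -> S x -> S y -> S (x + y). Proof. by case=> _ [h _]; apply: h. Qed.
Lemma DmodM S (d : D) x : is_Dmod S -> S x -> S (d%:F * x). Proof. by case=> _ [_ h]; apply: h. Qed.
Lemma DmodN S x : is_Dmod S -> S x -> S (- x).
Proof. by move=> hS hx; rewrite -mulN1r -tofrac1 -tofracN; apply: DmodM. Qed.
Lemma DmodB S x y : is_Dmod S -> S x -> S y -> S (x - y).
Proof. by move=> hS hx hy; apply: DmodD => //; apply: DmodN. Qed.
Lemma Dmod_sum S n (f : 'I_n -> K) : is_Dmod S -> (forall i, S (f i)) -> S (\sum_(i < n) f i).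
Proof. by move=> hS hf; apply: (big_ind S) => //; [apply: Dmod0|move=> *; apply: DmodD]. Qed.

Lemma fg_Dmod l : is_Dmod (fg_span l).
Proof.
split; first by exists (fun _ => 0); rewrite big1 // => i _; rewrite tofrac0 mul0r.
split.
  move=> x y [c ->] [c' ->]; exists (fun i => c i + c' i).
  by rewrite -big_split; apply: eq_bigr => i _; rewrite tofracD mulrDl.
move=> d x [c ->]; exists (fun i => d * c i).
by rewrite mulr_sumr; apply: eq_bigr => i _; rewrite tofracM mulrA.
Qed.

Lemma fg_in l i : (i < size l)%N -> fg_span l l`_i.
Proof.
move=> hi; exists (fun j : 'I_(size l) => if j == Ordinal hi then 1 else 0).
rewrite (bigD1 (Ordinal hi)) //= eqxx tofrac1 mul1r big1 ?addr0 //.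
by move=> j /negbTE ->; rewrite tofrac0 mul0r.
Qed.

Lemma fg_sub l S : is_Dmod S -> (forall i, (i < size l)%N -> S l`_i) -> subs (fg_span l) S.
Proof.
move=> hS hl x [c ->]; apply: Dmod_sum => // i; apply: DmodM => //; exact: hl.
Qed.

Lemma fg_catl l1 l2 : subs (fg_span l1) (fg_span (l1 ++ l2)).
Proof.
apply: fg_sub; first exact: fg_Dmod.
move=> i hi; have -> : l1`_i = (l1 ++ l2)`_i by rewrite nth_cat hi.
by apply: fg_in; rewrite size_cat ltn_addr.
Qed.

Lemma fg_catr l1 l2 : subs (fg_span l2) (fg_span (l1 ++ l2)).
Proof.
apply: fg_sub; first exact: fg_Dmod.
move=> i hi; have -> : l2`_i = (l1 ++ l2)`_(size l1 + i) by rewrite nth_cat ltnNge leq_addr /= addKn.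
by apply: fg_in; rewrite size_cat ltn_add2l.
Qed.

Lemma fg_cat_sub l1 l2 S : is_Dmod S -> subs (fg_span l1) S -> subs (fg_span l2) S ->
  subs (fg_span (l1 ++ l2)) S.
Proof.
move=> hS h1 h2; apply: fg_sub => // i; rewrite nth_cat size_cat => hi2.
case: (ltnP i (size l1)) => hi; first by apply: h1; apply: fg_in.
by apply: h2; apply: fg_in; rewrite -(ltn_add2l (size l1)) subnKC.
Qed.

Lemma fg_nz l : (exists x, fg_span l x /\ x != 0) -> exists i, (i < size l)%N /\ l`_i != 0.
Proof.
move=> [x [hx nx]]; apply: NNPP => h; case/negP: nx; apply/eqP.
apply: (fg_sub (S := fun y => y = 0)) hx.
  split=> //; split=> [u v -> ->|d u ->]; by rewrite ?addr0 ?mulr0.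
move=> i hi; apply/eqP; apply: NNPP => hn; apply: h; exists i; split=> //; exact/negP.
Qed.

Lemma fg_scale l (b : K) : seteq (scale_set b (fg_span l)) (fg_span [seq b * x | x <- l]).
Proof.
move=> y; split.
  move=> [e [he ->]].
  have : (fun x => fg_span [seq b * x | x <- l] (b * x)) e; last by [].
  apply: (fg_sub (S := fun x => fg_span [seq b * x | x <- l] (b * x))) he.
    split; first by rewrite mulr0; apply: Dmod0; apply: fg_Dmod.
    split=> [u v hu hv|d u hu]; first by rewrite mulrDr; apply: DmodD => //; apply: fg_Dmod.
    by rewrite mulrCA; apply: DmodM => //; apply: fg_Dmod.
  move=> i hi; rewrite -(nth_map 0 0 (fun x => b * x)) //; apply: fg_in; by rewrite size_map.
move=> hy; apply: (fg_sub (S := scale_set b (fg_span l))) hy.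
  split; first by exists 0; split; [apply: Dmod0; apply: fg_Dmod|rewrite mulr0].
  split=> [u v [e [he ->]] [e' [he' ->]]|d u [e [he ->]]].
    by exists (e + e'); split; [apply: DmodD=> //; apply: fg_Dmod|rewrite mulrDr].
  by exists (d%:F * e); split; [apply: DmodM=> //; apply: fg_Dmod|rewrite mulrCA].
move=> i; rewrite size_map => hi; rewrite (nth_map 0) //.
by exists l`_i; split=> //; apply: fg_in.
Qed.

End FG.
Section Zorn.
Variable T : Type.
Variable FF : (T -> Prop) -> Prop.
Definition zunion (C : (T -> Prop) -> Prop) : T -> Prop := fun x => exists A, C A /\ A x.
Definition zchain (C : (T -> Prop) -> Prop) :=
  forall A B, C A -> C B -> subs A B \/ subs B A.
Hypothesis Hch : forall C, zchain C -> (exists A, C A) -> (forall A, C A -> FF A) -> FF (zunion C).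
Definition nonmax A := exists N, FF N /\ subs A N /\ ~ subs N A.
Definition zg (A : T -> Prop) : T -> Prop :=
  match excluded_middle_informative (nonmax A) with
  | left h => proj1_sig (constructive_indefinite_description _ h)
  | right _ => A end.
Lemma zg_spec1 A : nonmax A -> FF (zg A) /\ subs A (zg A) /\ ~ subs (zg A) A.
Proof.
rewrite /zg; case: excluded_middle_informative => // h _.
by case: constructive_indefinite_description.
Qed.
Lemma zg_spec2 A : ~ nonmax A -> zg A = A.
Proof. by rewrite /zg; case: excluded_middle_informative. Qed.

Variable I0 : T -> Prop.
Hypothesis HI0 : FF I0.
Inductive tw : (T -> Prop) -> Prop :=
| tw0 : tw I0
| twS A : tw A -> tw (zg A)
| twU C : (forall A, C A -> tw A) -> zchain C -> (exists A, C A) -> tw (zunion C).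

Lemma tw_FF A : tw A -> FF A.
Proof.
elim=> // [B _ hB|C _ IH hc hne].
  by case: (classic (nonmax B)) => h; [case: (zg_spec1 h)|rewrite zg_spec2].
by apply: Hch.
Qed.

Lemma tw_g A : tw A -> subs A (zg A).
Proof.
move=> _ x; case: (classic (nonmax A)) => h; first by case: (zg_spec1 h) => _ [] /(_ x).
by rewrite zg_spec2.
Qed.

Lemma tw_I0 A : tw A -> subs I0 A.
Proof.
elim=> // [B hB IH|C _ IH hc [A0 hA0]] x hx.
  by apply: (tw_g hB); apply: IH.
by exists A0; split=> //; apply: IH.
Qed.

Definition strict (B c : T -> Prop) := subs B c /\ ~ subs c B.
Definition normal c := forall B, tw B -> strict B c -> subs (zg B) c.

Lemma L1 c : tw c -> normal c -> forall B, tw B -> subs B c \/ subs (zg c) B.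
Proof.
move=> tc nc B tB; elim: B / tB => [|B tB IH|C _ IH hc hne].
- by left; apply: tw_I0.
- case: IH => h.
    case: (classic (subs c B)) => h2.
      have eBc : B = c by apply: seteq_eq => x; split; [apply: h|apply: h2].
      by right; rewrite eBc.
    by left; apply: nc.
  by right=> x hx; apply: (tw_g tB); apply: h.
- case: (classic (exists A, C A /\ ~ subs A c)) => [[A [hA nA]]|h].
    case: (IH A hA) => // h2; right=> x hx; exists A; split=> //; exact: h2.
  left=> x [A [hA hx]]; apply: NNPP => nx; apply: h; exists A; split=> //.
  by move=> /(_ x hx).
Qed.

Lemma L2 c : tw c -> normal c.
Proof.
elim => [|c0 tc0 IH|C tC IH hc hne] B tB [sB nB].
- by case: nB; apply: tw_I0.
- case: (L1 tc0 IH tB) => h; last by case: nB.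
  case: (classic (subs c0 B)) => h2.
    have eBc : B = c0 by apply: seteq_eq => x; split; [apply: h|apply: h2].
    by rewrite eBc.
  by move=> x /(IH B tB (conj h h2)) /(tw_g tc0).
- case: (classic (exists A, C A /\ ~ subs A B)) => [[A [hA nA]]|h]; last first.
    case: nB => x [A [hA hx]]; apply: NNPP => nx; apply: h; exists A; split=> //.
    by move=> /(_ x hx).
  case: (L1 (tC A hA) (IH A hA) tB) => h2.
    by move=> x /(IH A hA B tB (conj h2 nA)) hx; exists A.
  by case: nA => x /(tw_g (tC A hA)) /h2.
Qed.

Lemma tw_chain : zchain tw.
Proof.
move=> A B tA tB; case: (L1 tA (L2 tA) tB) => h; first by right.
by left=> x /(tw_g tA) /h.
Qed.

Lemma zorn_ex : exists M, FF M /\ subs I0 M /\ forall N, FF N -> subs M N -> subs N M.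
Proof.
have tU : tw (zunion tw) by apply: twU => //; [exact: tw_chain|exists I0; exact: tw0].
exists (zunion tw); split; first exact: tw_FF.
split; first by move=> x hx; exists I0; split=> //; exact: tw0.
have gU : subs (zg (zunion tw)) (zunion tw).
  by move=> x hx; exists (zg (zunion tw)); split=> //; apply: twS.
have nm : ~ nonmax (zunion tw) by move=> /zg_spec1 [_ [_]].
move=> N hN sN x hx; apply: NNPP => nx; apply: nm; exists N; split=> //; split=> //.
by move=> /(_ x hx).
Qed.
End Zorn.
Section Star.
Variable D : idomainType.
Local Notation K := (KK D).
Variable star : (K -> Prop) -> (K -> Prop).
Hypothesis Hs : semistar star.
Implicit Types (E S G : K -> Prop) (l : seq K).

Definition nz E := exists x, E x /\ x != 0.

Lemma sFbar E : Fbar E -> Fbar (star E). Proof. by move: Hs => [h _]; apply: h. Qed.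
Lemma sScale E x : Fbar E -> x != 0 -> star (scale_set x E) = scale_set x (star E).
Proof. by move: Hs => [] _ [h _] hE hx; apply: seteq_eq; apply: h. Qed.
Lemma sMono E G : Fbar E -> Fbar G -> subs E G -> subs (star E) (star G).
Proof. by move: Hs => [] _ [_ [h _]]; apply: h. Qed.
Lemma sExt E : Fbar E -> subs E (star E).
Proof. by move: Hs => [] _ [_ [_ [h _]]]; apply: h. Qed.
Lemma sIdem E : Fbar E -> subs (star (star E)) (star E).
Proof. by move: Hs => [] _ [_ [_ [_ h]]] hE x /(h E hE x). Qed.
Lemma sDmod E : Fbar E -> is_Dmod (star E).
Proof. by move/sFbar; case. Qed.

Lemma fgFbar l : nz (fg_span l) -> Fbar (fg_span l).
Proof. by move=> h; split=> //; apply: fg_Dmod. Qed.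

Lemma Fbar_inD : Fbar (@inD D).
Proof.
split; last by exists 1; split; [exists 1; rewrite tofrac1|exact: oner_neq0].
split; first by exists 0; rewrite tofrac0.
split=> [x y [a ->] [b ->]|d x [a ->]]; first by exists (a + b); rewrite tofracD.
by exists (d * a); rewrite tofracM.
Qed.

Lemma sfE E x : star_f star E x <->
  exists l, nz (fg_span l) /\ subs (fg_span l) E /\ star (fg_span l) x.
Proof.
split.
  move=> [G [[l [hl hnz]] [hGE hx]]]; rewrite (seteq_eq hl) in hnz hGE hx.
  by exists l.
move=> [l [h1 [h2 h3]]]; exists (fg_span l); split=> //.
by exists l; split.
Qed.

Lemma fg1 (e : K) : fg_span [:: e] e.
Proof. exact: (@fg_in D [:: e] 0%N). Qed.

Lemma fg1_sub E (e : K) : is_Dmod E -> E e -> subs (fg_span [:: e]) E.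
Proof. by move=> hE he; apply: fg_sub => // -[]. Qed.

Lemma sf_ext E : is_Dmod E -> nz E -> subs E (star_f star E).
Proof.
move=> hE [e [he ne]] x hx; apply/sfE.
case: (eqVneq x 0) => [->|nx].
  exists [:: e]; split; first by exists e; split=> //; apply: fg1.
  split; first exact: fg1_sub.
  apply: Dmod0; apply: sDmod; apply: fgFbar; by exists e; split=> //; apply: fg1.
exists [:: x]; have nzx : nz (fg_span [:: x]) by exists x; split=> //; apply: fg1.
split=> //; split; first exact: fg1_sub.
by apply: sExt; [apply: fgFbar|apply: fg1].
Qed.

Lemma sf_mono E E' : subs E E' -> subs (star_f star E) (star_f star E').
Proof.
move=> h x /sfE [l [h1 [h2 h3]]]; apply/sfE; exists l; split=> //; split=> //.
by move=> y /h2 /h.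
Qed.

Lemma sf_combine E : is_Dmod E -> forall l, nz (star_f star E) ->
  (forall i, (i < size l)%N -> star_f star E l`_i) ->
  exists l', nz (fg_span l') /\ subs (fg_span l') E /\
    forall i, (i < size l)%N -> star (fg_span l') l`_i.
Proof.
move=> hE; elim=> [|a l IH] hnz hl.
  case: hnz => y [/sfE [l' [h1 [h2 h3]]] _]; by exists l'.
case: (IH hnz (fun i hi => hl i.+1 hi)) => l' [n' [s' h']].
case/sfE: (hl 0%N isT) => la [na [sa ha]].
exists (la ++ l'); split.
  by case: na => y [hy ny]; exists y; split=> //; apply: fg_catl.
split; first by apply: fg_cat_sub.
have F' : Fbar (fg_span (la ++ l')).
  by apply: fgFbar; case: na => y [hy ny]; exists y; split=> //; apply: fg_catl.
case=> [_|i hi] /=.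
  by apply: (sMono (fgFbar na) F' (@fg_catl _ la l')).
by apply: (sMono (fgFbar n') F' (@fg_catr _ la l')); apply: h'.
Qed.

Lemma sf_idem E : is_Dmod E -> subs (star_f star (star_f star E)) (star_f star E).
Proof.
move=> hE x /sfE [l [nl [sl hx]]].
have hnz : nz (star_f star E) by case: nl => y [hy ny]; exists y; split=> //; apply: sl.
case: (sf_combine hE hnz (fun i hi => sl _ (fg_in hi))) => l' [n' [s' h']].
apply/sfE; exists l'; split=> //; split=> //.
have F' := fgFbar n'.
apply: (sIdem F'); apply: (sMono (fgFbar nl) (sFbar F')) hx.
by apply: fg_sub => //; apply: sDmod.
Qed.

Lemma sf_Dmod E : is_Dmod E -> nz E -> is_Dmod (star_f star E).
Proof.
move=> hE hnz; split; first by apply: (sf_ext hE hnz); apply: Dmod0.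
split.
  move=> x y /sfE [l1 [n1 [s1 h1]]] /sfE [l2 [n2 [s2 h2]]].
  have n12 : nz (fg_span (l1 ++ l2)).
    by case: n1 => z [hz nzz]; exists z; split=> //; apply: fg_catl.
  apply/sfE; exists (l1 ++ l2); split=> //; split; first exact: fg_cat_sub.
  apply: DmodD; first by apply: sDmod; apply: fgFbar.
    exact: (sMono (fgFbar n1) (fgFbar n12) (@fg_catl _ l1 l2)).
  exact: (sMono (fgFbar n2) (fgFbar n12) (@fg_catr _ l1 l2)).
move=> d x /sfE [l [n [s h]]]; apply/sfE; exists l; split=> //; split=> //.
by apply: DmodM => //; apply: sDmod; apply: fgFbar.
Qed.

Lemma sf_sub_inD E : subs E (@inD D) -> subs (star_f star E) (star (@inD D)).
Proof.
move=> h x /sfE [l [n [s hx]]]; apply: (sMono (fgFbar n) Fbar_inD) hx.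
by move=> y /s /h.
Qed.

Lemma sf_one C : is_Dmod C -> star_f star C 1 -> subs (star (@inD D)) (star_f star C).
Proof.
move=> hC /sfE [l [n [s h1]]] x hx; apply/sfE; exists l; split=> //; split=> //.
have F' := fgFbar n.
apply: (sIdem F'); apply: (sMono Fbar_inD (sFbar F')) hx.
by move=> y [d ->]; rewrite -[d%:F]mulr1; apply: DmodM => //; apply: sDmod.
Qed.

End Star.
Section QMaxS.
Variable D : idomainType.
Local Notation K := (KK D).
Variable star : (K -> Prop) -> (K -> Prop).
Hypothesis Hs : semistar star.
Implicit Types (E S G : K -> Prop) (l : seq K).

Section QM.
Variable P : K -> Prop.
Hypothesis HP : QMax star P.
Lemma qm_Dmod : is_Dmod P. Proof. by case: HP => [[[_ h] _] _]. Qed.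
Lemma qm_inD : subs P (@inD D). Proof. by case: HP => [[[h _] _] _]. Qed.
Lemma qm_nz : nz P. Proof. by case: HP => [[_ [h _]] _]. Qed.
Lemma qm_quasi x : star_f star P x -> inD x -> P x.
Proof. by case: HP => [[_ [_ h]] _] h1 h2; apply/h. Qed.
Lemma qm_proper : ~ P 1. Proof. by case: HP => _ [h _]. Qed.
Lemma qm_max Q : quasi_ideal (star_f star) Q -> Defs.proper Q -> subs P Q -> subs Q P.
Proof. by case: HP => _ [_ h]; apply: h. Qed.
Lemma qm_0 : P 0. Proof. exact: Dmod0 qm_Dmod. Qed.

Lemma qm_prime (a b : D) : P (a * b)%:F -> P a%:F \/ P b%:F.
Proof.
move=> hab; apply: NNPP => hn.
have na : ~ P a%:F by move=> h; apply: hn; left.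
have nb : ~ P b%:F by move=> h; apply: hn; right.
have hPD := qm_Dmod.
pose J0 := fun x => exists p (d : D), P p /\ x = p + a%:F * d%:F.
have J0D : is_Dmod J0.
  split; first by exists 0, 0; split; [exact: qm_0|rewrite tofrac0 mulr0 addr0].
  split=> [x y [p [d [hp ->]]] [p' [d' [hp' ->]]]|d' x [p [d [hp ->]]]].
    exists (p + p'), (d + d'); split; first exact: DmodD.
    by rewrite tofracD mulrDr addrACA.
  exists (d'%:F * p), (d' * d); split; first exact: DmodM.
  by rewrite mulrDr tofracM mulrCA.
have aJ0 : J0 a%:F by exists 0, 1; split; [exact: qm_0|rewrite tofrac1 mulr1 add0r].
have a0 : a%:F != 0 by apply/eqP => h; apply: na; rewrite h; exact: qm_0.
have nzJ0 : nz J0 by exists a%:F.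
pose J := fun x => star_f star J0 x /\ inD x.
have JD : is_Dmod J.
  have h1 := sf_Dmod Hs J0D nzJ0; have [h2 [h3 h4]] := (Fbar_inD D).1.
  split; first by split; [apply: Dmod0|].
  split=> [x y [hx1 hx2] [hy1 hy2]|d x [hx1 hx2]]; first by split; [apply: DmodD|apply: h3].
  by split; [apply: DmodM|apply: h4].
have aJ : J a%:F by split; [apply: (sf_ext Hs J0D nzJ0)|exists a].
have nzJ : nz J by exists a%:F.
have qJ : quasi_ideal (star_f star) J.
  split; first by split=> // x [].
  split=> //; move=> x; split; last by move=> hx; split; [apply: (sf_ext Hs JD nzJ)|case: hx].
  move=> [hx1 hx2]; split=> //; apply: (sf_idem Hs J0D); apply: (sf_mono _ hx1).
  by move=> y [].
have PJ : subs P J.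
  move=> p hp; split; last exact: qm_inD.
  apply: (sf_ext Hs J0D nzJ0); exists p, 0; split=> //; by rewrite tofrac0 mulr0 addr0.
have J1 : J 1.
  apply: NNPP => hJ1; apply: na; exact: (qm_max qJ hJ1 PJ aJ).
case: J1 => /sfE [l [nl [sl h1]]] _.
apply: (nb); apply: qm_quasi; last by exists b.
have b0 : b%:F != 0 by apply/eqP => h; apply: nb; rewrite h; exact: qm_0.
have e1 := seteq_eq (fg_scale l b%:F).
apply/sfE; exists [seq b%:F * x | x <- l]; split.
  case: nl => z [hz nz0]; exists (b%:F * z); split; last by rewrite mulf_neq0.
  by rewrite -e1; exists z.
split.
  rewrite -e1 => y [x [/sl [p [d [hp ->]]] ->]].
  have -> : b%:F * (p + a%:F * d%:F) = b%:F * p + d%:F * (a * b)%:F.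
    by rewrite mulrDr tofracM [d%:F * _]mulrC -mulrA mulrCA.
  by apply: DmodD => //; apply: DmodM.
rewrite -e1 sScale //; last exact: fgFbar.
by exists 1; split=> //; rewrite mulr1.
Qed.

End QM.

Lemma qm_exists I : is_ideal I -> nz I -> ~ star_f star I 1 ->
  exists P, QMax star P /\ subs I P.
Proof.
move=> [hI hID] hnz hn1.
pose FF := fun J => is_ideal J /\ subs I J /\ ~ star_f star J 1.
have hch : forall C, zchain C -> (exists A, C A) -> (forall A, C A -> FF A) -> FF (zunion C).
  move=> C hc [A0 hA0] hCF.
  have UD : is_Dmod (zunion C).
    split; first by exists A0; split=> //; case: (hCF A0 hA0) => [[_ h] _]; apply: Dmod0.
    split=> [x y [A [hA hx]] [B [hB hy]]|d x [A [hA hx]]].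
      case: (hc A B hA hB) => h.
        by exists B; split=> //; case: (hCF B hB) => [[_ hBD] _]; apply: DmodD => //; apply: h.
      by exists A; split=> //; case: (hCF A hA) => [[_ hAD] _]; apply: DmodD => //; apply: h.
    by exists A; split=> //; case: (hCF A hA) => [[_ hAD] _]; apply: DmodM.
  split; first by split=> // x [A [hA hx]]; case: (hCF A hA) => [[h _] _]; apply: h.
  split; first by move=> x hx; exists A0; split=> //; case: (hCF A0 hA0) => _ [h _]; apply: h.
  move=> /sfE [l [nl [sl h1]]].
  have : exists A, C A /\ forall i, (i < size l)%N -> A l`_i.
    elim: l {nl h1} sl => [|a l IH] sl; first by exists A0.
    have sl' : subs (fg_span l) (zunion C).
      move=> y hy; apply: sl; apply: (@fg_catr _ [:: a] l); exact: hy.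
    case: (IH sl') => A [hA hl].
    case: (sl a (@fg_in _ (a :: l) 0%N isT)) => B [hB ha].
    case: (hc A B hA hB) => h.
      by exists B; split=> //; case=> [|i] hi //=; apply: h; apply: hl.
    by exists A; split=> //; case=> [|i] hi //=; [apply: h|apply: hl].
  case=> A [hA hl]; case: (hCF A hA) => [[_ hAD] [_ hn]]; apply: hn.
  apply/sfE; exists l; split=> //; split=> //; exact: fg_sub.
have FI : FF I by split; [split|split].
case: (zorn_ex hch FI) => M [[[hMD hMmod] [sIM n1]] [_ hmax]].
have nzM : nz M by case: hnz => x [hx nx]; exists x; split=> //; apply: sIM.
have MM : seteq (fun x => star_f star M x /\ inD x) M.
  pose M' := fun x => star_f star M x /\ inD x.
  have sMM' : subs M M' by move=> x hx; split; [apply: (sf_ext Hs hMmod nzM)|apply: hMD].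
  have FM' : FF M'.
    have h1 := sf_Dmod Hs hMmod nzM; have [h2 [h3 h4]] := (Fbar_inD D).1.
    split; first split.
      by move=> x [].
      split; first by split; [apply: Dmod0|].
      split=> [x y [hx1 hx2] [hy1 hy2]|d x [hx1 hx2]]; first by split; [apply: DmodD|apply: h3].
      by split; [apply: DmodM|apply: h4].
    split; first by move=> x /sIM /sMM'.
    move=> h; apply: n1; apply: (sf_idem Hs hMmod); apply: (sf_mono _ h).
    by move=> x [].
  move=> x; split; last exact: sMM'.
  exact: (hmax M' FM' sMM').
exists M; split; last by [].
split; first by split=> //; split.
split; first by move=> hM1; apply: n1; apply: (sf_ext Hs hMmod nzM).
move=> Q [[hQD hQmod] [nzQ qQ]] pQ sMQ.
apply: hmax => //; split; first by split.
split; first by move=> x /sIM /sMQ.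
by move=> h1; apply: pQ; apply/qQ; split=> //; exists 1; rewrite tofrac1.
Qed.

End QMaxS.
Section Nak.
Variable F : fieldType.
Variables (R m M : F -> Prop).
Hypotheses (M0 : M 0) (MD : forall x y, M x -> M y -> M (x + y))
  (MR : forall r x, R r -> M x -> M (r * x)) (mR : forall x, m x -> R x)
  (mD : forall x y, m x -> m y -> m (x + y)) (mRm : forall r x, R r -> m x -> m (r * x))
  (munit : forall c, m c -> exists v, R v /\ v * (1 - c) = 1).

Lemma M_sum n (f : 'I_n -> F) : (forall i, M (f i)) -> M (\sum_(i < n) f i).
Proof. by move=> hf; apply: (big_ind M). Qed.

Lemma nak N : forall (a b : nat -> F) (c : nat -> nat -> F),
  (forall j, (j < N)%N -> M (b j)) -> (forall j i, m (c j i)) ->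
  (forall j, (j < N)%N -> a j = b j + \sum_(i < N) c j i * a i) ->
  forall j, (j < N)%N -> M (a j).
Proof.
elim: N => [//|N IH] a b c hb hc ha.
have [v [hv hv1]] := munit (hc N N).
have haN : a N = v * (b N + \sum_(i < N) c N i * a i).
  have := ha N (ltnSn N); rewrite big_ord_recr /= => e.
  rewrite -[a N]mul1r -hv1 -mulrA; congr (_ * _).
  by rewrite mulrBl mul1r {1}e addrA addrK.
have hlt : forall j, (j < N)%N -> M (a j).
  apply: (IH a (fun j => b j + c j N * (v * b N))
                (fun j i => c j i + c j N * (v * c N i))).
  - move=> j hj; apply: MD; first by apply: hb; apply: ltnW.
    by apply: MR; [apply: mR|apply: MR => //; apply: hb].
  - move=> j i; apply: mD => //; apply: mRm; [exact: mR|exact: mRm].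
  - move=> j hj; rewrite (ha j (ltnW hj)) big_ord_recr /= haN.
    rewrite -addrA; congr (_ + _).
    rewrite [in RHS](eq_bigr (fun i : 'I_N => c j i * a i + c j N * v * (c N i * a i))); last first.
      by move=> i _; rewrite mulrDl !mulrA.
    rewrite big_split /= -mulr_sumr mulrDr mulrDr !mulrA.
    by rewrite addrCA.
move=> j; rewrite ltnS leq_eqVlt => /orP [/eqP ->|]; last exact: hlt.
rewrite haN; apply: MR => //; apply: MD; first by apply: hb.
by apply: M_sum => i; apply: MR; [apply: mR|apply: hlt].
Qed.
End Nak.
Definition pbool (Q : Prop) : bool := if excluded_middle_informative Q then true else false.
Lemma pboolP (Q : Prop) : reflect Q (pbool Q).
Proof. by rewrite /pbool; case: excluded_middle_informative => h; constructor. Qed.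

Section Loc.
Variable D : idomainType.
Local Notation K := (KK D).
Variable P : K -> Prop.
Hypotheses (PD : is_Dmod P) (Pprime : forall a b : D, P (a * b)%:F -> P a%:F \/ P b%:F)
  (P1 : ~ P 1).

Definition mm (x : K) := exists d s : D, P d%:F /\ ~ P s%:F /\ x = d%:F / s%:F.

Lemma nP0 (s : D) : ~ P s%:F -> s%:F != 0.
Proof. by move=> h; apply/eqP => e; apply: h; rewrite e; apply: Dmod0. Qed.
Lemma nPM (s s' : D) : ~ P s%:F -> ~ P s'%:F -> ~ P (s * s')%:F.
Proof. by move=> h1 h2 /Pprime []. Qed.
Lemma P_Dmul (d : D) x : P x -> P (x * d%:F).
Proof. by move=> h; rewrite mulrC; apply: DmodM. Qed.

Lemma locD x y : loc P x -> loc P y -> loc P (x + y).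
Proof.
move=> [d [s [hs ->]]] [d' [s' [hs' ->]]]; exists (d * s' + d' * s), (s * s').
split; first exact: nPM.
by rewrite addf_div ?nP0 // tofracD !tofracM.
Qed.
Lemma locM x y : loc P x -> loc P y -> loc P (x * y).
Proof.
move=> [d [s [hs ->]]] [d' [s' [hs' ->]]]; exists (d * d'), (s * s').
split; first exact: nPM.
by rewrite mulf_div !tofracM.
Qed.
Lemma loc_inD x : inD x -> loc P x.
Proof. by move=> [d ->]; exists d, 1; split; rewrite tofrac1 ?divr1. Qed.
Lemma loc_inv (s : D) : ~ P s%:F -> loc P (s%:F)^-1.
Proof. by move=> h; exists 1, s; split=> //; rewrite tofrac1 div1r. Qed.
Lemma mm_loc x : mm x -> loc P x.
Proof. by move=> [d [s [_ [hs ->]]]]; exists d, s. Qed.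
Lemma mmD x y : mm x -> mm y -> mm (x + y).
Proof.
move=> [d [s [hd [hs ->]]]] [d' [s' [hd' [hs' ->]]]]; exists (d * s' + d' * s), (s * s').
split; first by rewrite tofracD !tofracM; apply: DmodD => //; apply: P_Dmul.
split; first exact: nPM.
by rewrite addf_div ?nP0 // tofracD !tofracM.
Qed.
Lemma mmR r x : loc P r -> mm x -> mm (r * x).
Proof.
move=> [d [s [hs ->]]] [d' [s' [hd' [hs' ->]]]]; exists (d * d'), (s * s').
split; first by rewrite tofracM; apply: DmodM.
split; first exact: nPM.
by rewrite mulf_div !tofracM.
Qed.
Lemma mm_P (d : D) : P d%:F -> mm d%:F.
Proof. by move=> h; exists d, 1; split=> //; rewrite tofrac1 divr1. Qed.
Lemma mm0 : mm 0.
Proof. by rewrite -tofrac0; apply: mm_P; rewrite tofrac0; apply: Dmod0. Qed.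
Lemma munit c : mm c -> exists v, loc P v /\ v * (1 - c) = 1.
Proof.
move=> [d [s [hd [hs ->]]]].
have hsd : ~ P (s - d)%:F.
  move=> h; apply: hs; have -> : s = (s - d) + d by rewrite subrK.
  by rewrite tofracD; apply: DmodD.
exists (s%:F / (s - d)%:F); split; first by exists s, (s - d).
have s0 := nP0 hs; have sd0 := nP0 hsd.
have -> : 1 - d%:F / s%:F = (s - d)%:F / s%:F.
  rewrite tofracB mulrBl.
  by rewrite (divff s0).
by rewrite mulf_div [X in _ / X]mulrC divff // mulf_neq0.
Qed.

Variable E : K -> Prop.
Local Notation M := (gen_mod (loc P) E).

Lemma M_R r x : loc P r -> M x -> M (r * x).
Proof. by move=> hr hx; rewrite mulrC; apply: gm_mulr hx => a ha; apply: locM. Qed.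
Lemma M_E e : E e -> M e.
Proof. by move=> he; rewrite -[e]mulr1; apply: gm_base => //; rewrite -tofrac1; apply: loc_inD; exists 1. Qed.

Lemma content (p h : {poly K}) : (forall i, inD h`_i) -> (exists k, ~ P h`_k) ->
  (forall i, E (p * h)`_i) -> forall j, M p`_j.
Proof.
move=> hD hk hE.
have exk : exists k, pbool (~ P h`_k) by case: hk => k hk; exists k; apply/pboolP.
case: (ex_minnP exk) => k /pboolP hkk hmin.
have hlt : forall i, (i < k)%N -> P h`_i.
  move=> i hi; apply: NNPP => hn; have := hmin i (introT (pboolP _) hn).
  by rewrite leqNgt hi.
pose N := size p.
pose V := fun x => exists b (c : nat -> K), M b /\ (forall i, mm (c i)) /\
  x = b + \sum_(i < N) c i * p`_i.
have V0 : V 0.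
  exists 0, (fun _ => 0); split; first exact: gm0.
  by split; [move=> _; exact: mm0|rewrite big1 ?addr0 // => i _; rewrite mul0r].
have VD : forall x y, V x -> V y -> V (x + y).
  move=> x y [b [c [hb [hc ->]]]] [b' [c' [hb' [hc' ->]]]].
  exists (b + b'), (fun i => c i + c' i); split; first exact: gmD.
  split; first by move=> i; apply: mmD.
  by rewrite addrACA -big_split /=; congr (_ + _); apply: eq_bigr => i _; rewrite mulrDl.
have VR : forall r x, loc P r -> V x -> V (r * x).
  move=> r x hr [b [c [hb [hc ->]]]].
  exists (r * b), (fun i => r * c i); split; first exact: M_R.
  split; first by move=> i; apply: mmR.
  by rewrite mulrDr mulr_sumr; congr (_ + _); apply: eq_bigr => i _; rewrite mulrA.
have VM : forall x, M x -> V x.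
  move=> x hx; exists x, (fun _ => 0); split=> //.
  by split; [move=> _; exact: mm0|rewrite big1 ?addr0 // => i _; rewrite mul0r].
have Vm : forall d i, mm d -> V (d * p`_i).
  move=> d i hd; case: (ltnP i N) => hi; last by rewrite nth_default // mulr0.
  exists 0, (fun i' => if i' == i then d else 0); split; first exact: gm0.
  split; first by move=> i'; case: eqP => // _; exact: mm0.
  rewrite add0r (bigD1 (Ordinal hi)) //= eqxx big1 ?addr0 //.
  by move=> j /negbTE; rewrite -(inj_eq val_inj) /= => ->; rewrite mul0r.
have VB : forall x y, V x -> V y -> V (x - y).
  move=> x y hx hy; apply: VD => //; rewrite -mulN1r; apply: VR => //.
  by apply: loc_inD; exists (-1); rewrite tofracN tofrac1.
have Vall : forall j, V p`_j.
  elim/ltn_ind => j IH.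
  have ht := hE (j + k)%N; rewrite coefM in ht.
  have hj : (j < (j + k).+1)%N by rewrite ltnS leq_addr.
  rewrite (bigD1 (Ordinal hj)) //= addKn in ht.
  have hrest : V (\sum_(i < (j + k).+1 | i != Ordinal hj) p`_i * h`_(j + k - i)).
    apply: (big_ind V) => // i; rewrite -(inj_eq val_inj) /= => hij.
    rewrite mulrC; case: (ltngtP i j) hij => // hij _.
      by apply: VR; [apply: loc_inD; apply: hD|apply: IH].
    have hi := ltn_ord i.
    case: (hD (j + k - i)%N) => d hd; rewrite hd; apply: Vm; apply: mm_P.
    by rewrite -hd; apply: hlt; rewrite ltn_subLR ?ltn_add2r.
  have hpk : V (p`_j * h`_k).
    have -> : p`_j * h`_k = (p`_j * h`_k + \sum_(i < (j + k).+1 | i != Ordinal hj) p`_i * h`_(j + k - i)) - \sum_(i < (j + k).+1 | i != Ordinal hj) p`_i * h`_(j + k - i) by rewrite addrK.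
    by apply: VB => //; apply: VM; apply: M_E.
  case: (hD k) => dk hdk.
  have hk0 : dk%:F != 0 by apply: nP0; rewrite -hdk.
  have -> : p`_j = (dk%:F)^-1 * (p`_j * h`_k) by rewrite hdk mulrC mulfK.
  by apply: VR => //; apply: loc_inv; rewrite -hdk.
have Vall' : forall j, {b : K & {c : nat -> K | M b /\ (forall i, mm (c i)) /\
    p`_j = b + \sum_(i < N) c i * p`_i}}.
  move=> j; have hv : exists b (c : nat -> K), M b /\ (forall i, mm (c i)) /\
    p`_j = b + \sum_(i < N) c i * p`_i by exact: Vall.
  exists (proj1_sig (constructive_indefinite_description _ hv)).
  exact: (constructive_indefinite_description _ (proj2_sig (constructive_indefinite_description _ hv))).
have hN := @nak _ (loc P) mm M (gm0 _ _) (fun x y => @gmD _ _ _ x y) M_R mm_loc mmD mmR munit N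
  (fun j => p`_j) (fun j => projT1 (Vall' j)) (fun j => proj1_sig (projT2 (Vall' j))).
move=> j; case: (ltnP j N) => hj; last by rewrite nth_default //; apply: gm0.
apply: hN => //.
- by move=> j' _; exact: (proj2_sig (projT2 (Vall' j'))).1.
- by move=> j' i; exact: ((proj2_sig (projT2 (Vall' j'))).2.1 i).
- by move=> j' _; exact: (proj2_sig (projT2 (Vall' j'))).2.2.
Qed.

Lemma gm_denom x : is_Dmod E -> M x -> exists s : D, ~ P s%:F /\ E (s%:F * x).
Proof.
move=> hE hx; apply: (gm_ind (S := fun x => exists s : D, ~ P s%:F /\ E (s%:F * x))) hx.
- by exists 1; rewrite tofrac1 mulr0; split=> //; apply: Dmod0.
- move=> u v [s [hs hu]] [s' [hs' hv]]; exists (s * s'); split; first exact: nPM.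
  rewrite tofracM mulrDr; apply: DmodD => //.
    by rewrite -mulrA mulrCA; apply: DmodM.
  by rewrite -mulrA; apply: DmodM.
- move=> e a he [d [s [hs ->]]]; exists s; split=> //.
  by rewrite [e * _]mulrC mulrA mulrCA divff ?nP0 // mulr1; apply: DmodM.
Qed.
End Loc.

Section Gauss.
Variable F : fieldType.
Variables (A Q : F -> Prop).
Hypotheses (Q0 : Q 0) (QD : forall x y, Q x -> Q y -> Q (x + y))
  (QA : forall a x, A a -> Q x -> Q (a * x)) (AN1 : A (-1))
  (Qpr : forall a b, A a -> A b -> Q (a * b) -> Q a \/ Q b).

Lemma gauss_prime (p q : {poly F}) : (forall i, A p`_i) -> (forall i, A q`_i) ->
  (forall i, Q (p * q)`_i) -> (forall i, Q p`_i) \/ (forall i, Q q`_i).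
Proof.
move=> hp hq hpq; apply: NNPP => hn.
have [i0 hi0 hmi] : exists2 i, ~ Q p`_i & forall i', (i' < i)%N -> Q p`_i'.
  have ex : exists i, pbool (~ Q p`_i).
    apply: NNPP => h; apply: hn; left => i; apply: NNPP => hi; apply: h; exists i; exact/pboolP.
  case: (ex_minnP ex) => i /pboolP hi hm; exists i => // i' hi'; apply: NNPP => h.
  by have := hm i' (introT (pboolP _) h); rewrite leqNgt hi'.
have [j0 hj0 hmj] : exists2 j, ~ Q q`_j & forall j', (j' < j)%N -> Q q`_j'.
  have ex : exists i, pbool (~ Q q`_i).
    apply: NNPP => h; apply: hn; right => i; apply: NNPP => hi; apply: h; exists i; exact/pboolP.
  case: (ex_minnP ex) => i /pboolP hi hm; exists i => // i' hi'; apply: NNPP => h.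
  by have := hm i' (introT (pboolP _) h); rewrite leqNgt hi'.
have ht := hpq (i0 + j0)%N; rewrite coefM in ht.
have hj : (i0 < (i0 + j0).+1)%N by rewrite ltnS leq_addr.
rewrite (bigD1 (Ordinal hj)) //= addKn in ht.
have hrest : Q (\sum_(i < (i0 + j0).+1 | i != Ordinal hj) p`_i * q`_(i0 + j0 - i)).
  apply: (big_ind Q) => // i; rewrite -(inj_eq val_inj) /= => hij.
  case: (ltngtP i i0) hij => // hij _.
    by rewrite mulrC; apply: QA => //; apply: hmi.
  apply: QA => //; apply: hmj; have hi := ltn_ord i.
  by rewrite ltn_subLR ?ltn_add2r.
have : Q (p`_i0 * q`_j0).
  have -> : p`_i0 * q`_j0 = (p`_i0 * q`_j0 + \sum_(i < (i0 + j0).+1 | i != Ordinal hj) p`_i * q`_(i0 + j0 - i)) + (-1) * \sum_(i < (i0 + j0).+1 | i != Ordinal hj) p`_i * q`_(i0 + j0 - i) by rewrite mulN1r addrK.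
  by apply: QD => //; apply: QA.
by case/Qpr => //.
Qed.
End Gauss.

Section PrimeFactor.
Variable F : fieldType.
Lemma prime_factor (v : {poly F}) : (1 < size v)%N -> exists pi : {poly F},
  (1 < size pi)%N /\ pi %| v /\ forall a b, pi %| a * b -> pi %| a \/ pi %| b.
Proof.
move=> hv.
have ex : exists n, pbool (exists q : {poly F}, (1 < size q)%N /\ q %| v /\ size q = n).
  by exists (size v); apply/pboolP; exists v; split=> //; split=> //; apply: dvdpp.
case: (ex_minnP ex) => n /pboolP [pi [hpi [dpi spi]]] hmin.
exists pi; split=> //; split=> // a b hab.
have pi0 : pi != 0 by rewrite -size_poly_eq0 -lt0n (ltn_trans _ hpi).
case: (ltnP 1 (size (gcdp pi a))) => hg.
  have hgv : gcdp pi a %| v by apply: dvdp_trans dpi; apply: dvdp_gcdl.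
  have := hmin (size (gcdp pi a)) (introT (pboolP _) (ex_intro _ (gcdp pi a) (conj hg (conj hgv erefl)))).
  rewrite -spi => hle.
  have hge := dvdp_leq pi0 (dvdp_gcdl pi a).
  have : size (gcdp pi a) == size pi by rewrite eqn_leq hge hle.
  rewrite dvdp_size_eqp ?dvdp_gcdl // => heq.
  left; rewrite -(eqp_dvdl _ heq); exact: dvdp_gcdr.
have hcop : coprimep pi a.
  rewrite coprimep_def eqn_leq hg /= lt0n size_poly_eq0 gcdp_eq0 negb_and pi0 //.
right; by rewrite -(Gauss_dvdpr _ hcop).
Qed.
End PrimeFactor.

Lemma tofrac_inj (R : idomainType) (p q : R) : p%:F = q%:F -> p = q.
Proof. by move=> h; apply/eqP; rewrite -tofrac_eq h. Qed.

Section PolyA.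
Variable F : fieldType.
Variable A : F -> Prop.
Hypotheses (A0 : A 0) (AD : forall x y, A x -> A y -> A (x + y))
  (AM : forall x y, A x -> A y -> A (x * y)).
Lemma polyA_mul (p q : {poly F}) : (forall i, A p`_i) -> (forall i, A q`_i) ->
  forall i, A (p * q)`_i.
Proof. by move=> hp hq i; rewrite coefM; apply: (big_ind A) => // j _; apply: AM. Qed.
Lemma polyA_add (p q : {poly F}) : (forall i, A p`_i) -> (forall i, A q`_i) ->
  forall i, A (p + q)`_i.
Proof. by move=> hp hq i; rewrite coefD; apply: AD. Qed.
End PolyA.

Section Main.
Variable D : idomainType.
Local Notation K := (KK D).
Variable star : (K -> Prop) -> (K -> Prop).
Hypothesis Hs : semistar star.

Lemma polyY_eq (A : K1 D -> Prop) (q : {poly K1 D}) : polyY A q%:F <-> forall i, A q`_i.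
Proof.
split; last by move=> h; exists q.
by move=> [q' [/tofrac_inj -> h]].
Qed.

Lemma inD0 : inD (0 : K). Proof. by exists 0; rewrite tofrac0. Qed.
Lemma inD_1 : inD (1 : K). Proof. by exists 1; rewrite tofrac1. Qed.
Lemma inDD (x y : K) : inD x -> inD y -> inD (x + y).
Proof. by move=> [a ->] [b ->]; exists (a + b); rewrite tofracD. Qed.
Lemma inDM (x y : K) : inD x -> inD y -> inD (x * y).
Proof. by move=> [a ->] [b ->]; exists (a * b); rewrite tofracM. Qed.
Lemma inDN1 : inD (-1 : K). Proof. by exists (-1); rewrite tofracN tofrac1. Qed.

Definition Dpoly (p : {poly K}) := forall i, inD p`_i.
Lemma inD1E (f : K1 D) : inD1 f <-> exists p, f = p%:F /\ Dpoly p.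
Proof. by []. Qed.
Lemma inD1_0 : inD1 (0 : K1 D).
Proof. by exists 0; rewrite tofrac0; split=> // i; rewrite coef0; apply: inD0. Qed.
Lemma inD1_1 : inD1 (1 : K1 D).
Proof.
exists 1; rewrite tofrac1; split=> // i; rewrite coefC; case: eqP => _; [apply: inD_1|apply: inD0].
Qed.
Lemma inD1_D (x y : K1 D) : inD1 x -> inD1 y -> inD1 (x + y).
Proof.
move=> [p [-> hp]] [q [-> hq]]; exists (p + q); split; first by rewrite tofracD.
move=> i; exact: (polyA_add inDD hp hq i).
Qed.
Lemma inD1_M (x y : K1 D) : inD1 x -> inD1 y -> inD1 (x * y).
Proof.
move=> [p [-> hp]] [q [-> hq]]; exists (p * q); split; first by rewrite tofracM.
move=> i; exact: (polyA_mul inD0 inDD inDM hp hq i).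
Qed.
Lemma inD1_N1 : inD1 (-1 : K1 D).
Proof.
exists (-1); rewrite tofracN tofrac1; split=> // i; rewrite -polyCN coefC.
case: eqP => _; [apply: inDN1|apply: inD0].
Qed.
Lemma inD1_emb1 (c : K) : inD c -> inD1 (emb1 c).
Proof. by move=> h; exists c%:P; split=> // i; rewrite coefC; case: eqP => _ //; apply: inD0. Qed.

Lemma emb1D : {morph (@emb1 D) : x y / x + y}.
Proof. by move=> x y; rewrite /emb1 polyCD tofracD. Qed.
Lemma emb1M : {morph (@emb1 D) : x y / x * y}.
Proof. by move=> x y; rewrite /emb1 polyCM tofracM. Qed.
Lemma emb10 : emb1 (0 : K) = 0. Proof. by rewrite /emb1 tofrac0. Qed.
Lemma emb2D : {morph (@emb2 D) : x y / x + y}.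
Proof. by move=> x y; rewrite /emb2 polyCD tofracD. Qed.
Lemma emb2M : {morph (@emb2 D) : x y / x * y}.
Proof. by move=> x y; rewrite /emb2 polyCM tofracM. Qed.
Lemma emb20 : emb2 (0 : K1 D) = 0. Proof. by rewrite /emb2 tofrac0. Qed.

Definition prime_parts (Q : K1 D -> Prop) := is_prime1 Q.
Section Pr.
Variable Q : K1 D -> Prop.
Hypothesis HQ : is_prime1 Q.
Lemma pr_sub : subs Q (@inD1 D). Proof. by case: HQ. Qed.
Lemma pr0 : Q 0. Proof. by case: HQ => _ []. Qed.
Lemma prD x y : Q x -> Q y -> Q (x + y). Proof. by case: HQ => _ [_ [h _]]; apply: h. Qed.
Lemma prM a x : inD1 a -> Q x -> Q (a * x). Proof. by case: HQ => _ [_ [_ [h _]]]; apply: h. Qed.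
Lemma pr1 : ~ Q 1. Proof. by case: HQ => _ [_ [_ [_ [h _]]]]. Qed.
Lemma prP a b : inD1 a -> inD1 b -> Q (a * b) -> Q a \/ Q b.
Proof. by case: HQ => _ [_ [_ [_ [_ h]]]]; apply: h. Qed.
End Pr.

Lemma delta0 : Delta1 star (fun z : K1 D => z = 0).
Proof.
split.
  split; first by move=> z ->; apply: inD1_0.
  split=> //; split; first by move=> x y -> ->; rewrite addr0.
  split; first by move=> a x _ ->; rewrite mulr0.
  split; first by move=> h; move: (@oner_neq0 (K1 D)); rewrite h eqxx.
  by move=> a b _ _ /eqP; rewrite mulf_eq0 => /orP [] /eqP; [left|right].
left=> c [_ /eqP]; rewrite /emb1 tofrac_eq0 polyC_eq0; exact/eqP.
Qed.

Lemma S1_nz z : S1 star z -> z != 0.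
Proof.
move=> [_ h]; apply/eqP => e; apply: (h _ delta0); exists 0.
by split; [rewrite e tofrac0|move=> i; exact: coef0].
Qed.

Lemma S1_poly z : S1 star z -> exists s : {poly K1 D}, z = s%:F /\ forall i, inD1 s`_i.
Proof. by case=> [[s hs] _]; exists s. Qed.

Lemma S1_1 : S1 star 1.
Proof.
split; first by rewrite -tofrac1; apply/polyY_eq => i; rewrite coefC; case: eqP => _;
  [apply: inD1_1|apply: inD1_0].
move=> Q [HQ _]; rewrite -tofrac1 => /polyY_eq /(_ 0%N); rewrite coefC eqxx.
exact: pr1.
Qed.

Lemma S1_M z1 z2 : S1 star z1 -> S1 star z2 -> S1 star (z1 * z2).
Proof.
move=> h1 h2; case: (S1_poly h1) => s1 [e1 hs1]; case: (S1_poly h2) => s2 [e2 hs2].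
rewrite e1 e2 -tofracM; split.
  by apply/polyY_eq => i; exact: (polyA_mul inD1_0 inD1_D inD1_M hs1 hs2 i).
move=> Q hQ /polyY_eq hq; have HQ := hQ.1.
case: (gauss_prime (pr0 HQ) (prD HQ) (prM HQ) inD1_N1 (prP HQ) hs1 hs2 hq) => h.
  by case: h1 => _ /(_ Q hQ); rewrite e1; apply; apply/polyY_eq.
by case: h2 => _ /(_ Q hQ); rewrite e2; apply; apply/polyY_eq.
Qed.

Lemma locY_mul z (d : K1 D) : locY star z -> inD1 d -> locY star (z * emb2 d).
Proof.
move=> [a [s [[qa [-> hqa]] [hs ->]]]] hd; exists ((qa * d%:P)%:F), s; split.
  by apply/polyY_eq => i; rewrite coefMC; apply: inD1_M.
by split=> //; rewrite mulrAC /emb2 tofracM.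
Qed.

Lemma locY_D1 (d : K1 D) : inD1 d -> locY star (emb2 d).
Proof.
move=> hd; have h1 : locY star 1.
  exists 1, 1; split; first by rewrite -tofrac1; apply/polyY_eq => i; rewrite coefC;
    case: eqP => _; [apply: inD1_1|apply: inD1_0].
  by split; [exact: S1_1|rewrite divr1].
by rewrite -[emb2 d]mul1r; apply: locY_mul.
Qed.

Variable E : K -> Prop.
Hypothesis HE : Fbar E.
Lemma EDmod : is_Dmod E. Proof. by case: HE. Qed.

Definition Epoly (w : K1 D) := exists r : {poly K}, w = r%:F /\ forall j, E r`_j.
Lemma Epoly0 : Epoly 0.
Proof. by exists 0; rewrite tofrac0; split=> // j; rewrite coef0; apply: Dmod0 EDmod. Qed.
Lemma EpolyD x y : Epoly x -> Epoly y -> Epoly (x + y).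
Proof.
move=> [r [-> hr]] [r' [-> hr']]; exists (r + r'); rewrite tofracD; split=> // j.
by rewrite coefD; apply: DmodD EDmod _ _.
Qed.
Lemma EpolyM x a : Epoly x -> inD1 a -> Epoly (x * a).
Proof.
move=> [r [-> hr]] [pa [-> hpa]]; exists (r * pa); rewrite tofracM; split=> // j.
rewrite coefM; apply: (big_ind E); [exact: Dmod0 EDmod|move=> u v; exact: DmodD EDmod|].
move=> i _; case: (hpa (j - i)%N) => d ->; rewrite mulrC; apply: DmodM EDmod _.
exact: hr.
Qed.
Lemma Epoly_e e a : E e -> inD1 a -> Epoly (emb1 e * a).
Proof.
move=> he ha; apply: EpolyM => //; exists e%:P; split=> // j; rewrite coefC.
by case: eqP => _ //; apply: Dmod0 EDmod.
Qed.

Lemma fpoly (f : K1 D) (s : {poly K1 D}) : (forall i, inD1 s`_i) ->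
  (forall Q, Delta1 star Q -> ~ polyY Q s%:F) ->
  (forall i, exists r : {poly K}, f * s`_i = r%:F) -> exists p : {poly K}, f = p%:F.
Proof.
move=> hs hQ hr.
case: (fracE f) => u [v [v0 ef0]]; rewrite ef0 in hr *.
pose g := gcdp u v.
have g0 : g != 0 by rewrite gcdp_eq0 negb_and v0 orbT.
pose u' := u %/ g; pose v' := v %/ g.
have eu : u = u' * g by rewrite divpK // dvdp_gcdl.
have ev : v = v' * g by rewrite divpK // dvdp_gcdr.
have v'0 : v' != 0 by apply: contraNneq v0 => e; rewrite ev e mul0r.
have cop : coprimep u' v' by apply: coprimep_div_gcd; rewrite v0 orbT.
have ef : u%:F / v%:F = u'%:F / v'%:F.
  by rewrite eu ev !tofracM invfM mulrACA divff ?mulr1 // tofrac_eq0.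
rewrite ef in hr *.
have v'F : v'%:F != 0 by rewrite tofrac_eq0.
case: (leqP (size v') 1) => hv.
  have ec := size1_polyC hv; set c := v'`_0 in ec.
  have c0 : c != 0 by apply: contraNneq v'0 => e; rewrite ec e.
  exists (u' * (c^-1)%:P).
  rewrite tofracM; congr (_ * _).
  apply: (mulfI v'F).
  by rewrite divff // -tofracM ec -polyCM divff // tofrac1.
case: (prime_factor hv) => pi [hpi [dpi ppi]].
have pi0 : pi != 0 by rewrite -size_poly_eq0 -lt0n (ltn_trans _ hpi).
pose Q := fun z : K1 D => inD1 z /\ exists r : {poly K}, z = (pi * r)%:F.
have dQ : Delta1 star Q.
  split.
    split; first by move=> z [].
    split; first by split; [exact: inD1_0|exists 0; rewrite mulr0].
    split.
      move=> x y [hx [r ex]] [hy [r' ey]]; split; first exact: inD1_D.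
      by exists (r + r'); rewrite ex ey mulrDr tofracD.
    split.
      move=> a x ha [hx [r ex]]; split; first exact: inD1_M.
      by case: ha => pa [ea _]; exists (pa * r); rewrite ea ex -tofracM mulrCA.
    split.
      move=> [_ [r e]]; have e1 : pi * r = 1 by apply: tofrac_inj; rewrite -e tofrac1.
      have : pi %| 1 by rewrite -e1 dvdp_mulIl.
      by rewrite dvdp1 => /eqP h; rewrite h in hpi.
    move=> a b ha hb [hab [r er]].
    case: (ha) => pa [ea _]; case: (hb) => pb [eb _].
    have : pi %| pa * pb.
      have -> : pa * pb = pi * r by apply: tofrac_inj; rewrite tofracM -ea -eb.
      exact: dvdp_mulIl.
    case/ppi => /dvdpP [qq eqq].
      by left; split=> //; exists qq; rewrite ea eqq mulrC.
    by right; split=> //; exists qq; rewrite eb eqq mulrC.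
  left=> c [_ [_ [r e]]]; apply/eqP; apply: contraT => c0.
  have ec : c%:P = pi * r by apply: tofrac_inj; rewrite -e.
  have : (size pi <= size c%:P)%N.
    by apply: dvdp_leq; [rewrite polyC_eq0|rewrite ec dvdp_mulIl].
  by rewrite size_polyC c0 leqNgt hpi.
case: (hQ Q dQ); apply/polyY_eq => i; split; first exact: hs.
case: (hs i) => h [ehi _]; case: (hr i) => r er; rewrite ehi in er.
have euh : u' * h = r * v'.
  apply: tofrac_inj; by rewrite !tofracM -er [RHS]mulrAC divfK.
have : pi %| u' * h by rewrite euh; apply: dvdp_mull.
case/ppi => hd.
  have : pi %| gcdp u' v' by rewrite dvdp_gcd hd.
  move/(dvdp_leq _); rewrite gcdp_eq0 negb_and v'0 orbT => /(_ isT).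
  by move: cop; rewrite coprimep_def => /eqP ->; rewrite leqNgt hpi.
case/dvdpP: hd => qq eqq; by exists qq; rewrite ehi eqq mulrC.
Qed.
Definition QP (P : K -> Prop) : K1 D -> Prop :=
  fun f => exists p : {poly K}, f = p%:F /\ forall i, P p`_i.

Lemma qm_delta P : QMax star P -> Delta1 star (QP P).
Proof.
move=> HP.
have PD := qm_Dmod HP; have PinD := qm_inD HP.
have contrE : forall c, contr (QP P) c <-> P c.
  move=> c; split.
    move=> [_ [p [e hp]]]; have ep : p = c%:P by apply: tofrac_inj; rewrite -e.
    by have := hp 0%N; rewrite ep coefC.
  move=> hc; split; first exact: PinD.
  by exists c%:P; split=> // i; rewrite coefC; case: eqP => _ //; apply: Dmod0.
split.
  split.
    move=> z [p [-> hp]]; exists p; split=> // i; exact: PinD.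
  split; first by exists 0; rewrite tofrac0; split=> // i; rewrite coef0; apply: Dmod0.
  split.
    move=> x y [p [-> hp]] [q [-> hq]]; exists (p + q); rewrite tofracD; split=> // i.
    by rewrite coefD; apply: DmodD.
  split.
    move=> a x [pa [-> hpa]] [p [-> hp]]; exists (pa * p); rewrite tofracM; split=> // i.
    rewrite coefM; apply: (big_ind P); [exact: Dmod0|move=> u v; exact: DmodD|].
    move=> j _; case: (hpa j) => d ->; exact: DmodM.
  split.
    move=> [p [e hp]]; have ep : p = 1 by apply: tofrac_inj; rewrite -e tofrac1.
    by apply: (qm_proper HP); have := hp 0%N; rewrite ep coefC.
  move=> a b [pa [-> hpa]] [pb [-> hpb]] [p [e hp]].
  have ep : p = pa * pb by apply: tofrac_inj; rewrite -e tofracM.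
  have QA : forall a x, inD a -> P x -> P (a * x) by move=> a' x [d ->]; exact: DmodM.
  have Qpr : forall a b, inD a -> inD b -> P (a * b) -> P a \/ P b.
    by move=> a' b' [d ->] [d' ->]; rewrite -tofracM; exact: (qm_prime Hs HP).
  have hpq : forall i, P (pa * pb)`_i by rewrite -ep.
  case: (@gauss_prime _ (@inD D) P (Dmod0 PD) (fun x y hx hy => DmodD PD hx hy) QA inDN1 Qpr pa pb hpa hpb hpq) => h.
    by left; exists pa.
  by right; exists pb.
right; split.
  move=> f; split => [[p [e hp]]|[p [e hp]]]; exists p; split=> // i; exact/contrE.
split; first by apply: sf_sub_inD => // c [].
move=> h.
have : star (@inD D) 1 by apply: sExt => //; [exact: Fbar_inD|exact: inD_1].
move/h => /(sf_mono (E' := P)) h2.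
apply: (qm_proper HP); apply: (qm_quasi HP); last exact: inD_1.
by apply: h2 => c /contrE.
Qed.

Lemma Epoly_polyM (q s : {poly K1 D}) : (forall i, Epoly q`_i) -> (forall i, inD1 s`_i) ->
  forall i, Epoly (q * s)`_i.
Proof.
move=> hq hs i; rewrite coefM; apply: (big_ind Epoly); [exact: Epoly0|exact: EpolyD|].
by move=> j _; apply: EpolyM.
Qed.

Lemma coreX f : gen_mod (locY star) (img (fun e => emb2 (emb1 e)) E) (emb2 f) ->
  exists p : {poly K}, f = p%:F /\ forall i, star_tilde star E p`_i.
Proof.
move=> hf.
pose T := fun z : K2 D => exists s : {poly K1 D}, S1 star s%:F /\
  exists q : {poly K1 D}, z * s%:F = q%:F /\ forall i, Epoly q`_i.
have hT : T (emb2 f).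
  apply: (gm_ind (S := T)) hf.
  - exists 1; split; first by rewrite tofrac1; exact: S1_1.
    by exists 0; rewrite mul0r tofrac0; split=> // i; rewrite coef0; exact: Epoly0.
  - move=> x y [s1 [hs1 [q1 [e1 hq1]]]] [s2 [hs2 [q2 [e2 hq2]]]].
    exists (s1 * s2); split; first by rewrite tofracM; exact: S1_M.
    exists (q1 * s2 + q2 * s1); split.
      by rewrite tofracD !tofracM mulrDl mulrA e1 [s1%:F * s2%:F]mulrC mulrA e2.
    move=> i; rewrite coefD; apply: EpolyD; apply: Epoly_polyM => //.
      by case: hs2 => /polyY_eq.
    by case: hs1 => /polyY_eq.
  - move=> w a [e [he ->]] [a1 [s1 [ha1 [hs1 ->]]]].
    case: (S1_poly hs1) => s [es hsd]; exists s; split; first by rewrite -es.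
    case: ha1 => q1 [ea1 hq1]; exists ((emb1 e)%:P * q1); split.
      by rewrite -es -mulrA divfK ?S1_nz // ea1 tofracM.
    by move=> i; rewrite coefCM; apply: Epoly_e.
case: hT => s [hs [q [eq hq]]].
have eq' : f%:P * s = q by apply: tofrac_inj; rewrite tofracM.
have hsd : forall i, inD1 s`_i by case: hs => /polyY_eq.
have hfs : forall i, Epoly (f * s`_i) by move=> i; rewrite -coefCM eq'.
case: (@fpoly f s hsd hs.2 (fun i => match hfs i with ex_intro r (conj er _) => ex_intro _ r er end)) => p ef.
exists p; split=> // i P HP.
have nq := hs.2 (QP P) (qm_delta HP).
have [k hk] : exists k, ~ QP P s`_k.
  apply: NNPP => h; apply: nq; apply/polyY_eq => k; apply: NNPP => hk; apply: h; exists k.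
  exact: hk.
case: (hsd k) => h [eh hh].
have hj : exists j, ~ P h`_j.
  apply: NNPP => hn; apply: hk; exists h; split=> // j; apply: NNPP => hj; apply: hn.
  by exists j.
case: (hfs k) => r [er hr]; rewrite ef eh -tofracM in er.
have epr := tofrac_inj er.
apply: (content (qm_Dmod HP) (qm_prime Hs HP) (qm_proper HP) hh hj) => j'.
by rewrite epr; exact: hr.
Qed.

Lemma coreZ x : star_tilde star E x ->
  gen_mod (locY star) (img (fun e => emb2 (emb1 e)) E) (emb2 (emb1 x)).
Proof.
move=> hx.
pose I := fun c : K => inD c /\ E (c * x).
have ID : is_Dmod I.
  split; first by split; [exact: inD0|rewrite mul0r; exact: Dmod0 EDmod].
  split.
    move=> u v [hu1 hu2] [hv1 hv2]; split; first exact: inDD.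
    by rewrite mulrDl; exact: DmodD EDmod _ _.
  move=> d u [hu1 hu2]; split; first by apply: inDM => //; exists d.
  by rewrite -mulrA; apply: DmodM EDmod _.
have Iid : is_ideal I by split=> // c [].
have nzI : nz I.
  case: (HE) => _ [e [he ne]].
  case: (fracE x) => a [b [b0 ex]]; case: (fracE e) => a' [b' [b'0 ee]].
  have a'0 : a' != 0 by apply: contraNneq ne => h; rewrite ee h tofrac0 mul0r.
  exists (b * a')%:F; split; last by rewrite tofrac_eq0 mulf_neq0.
  split; first by exists (b * a').
  have -> : (b * a')%:F * x = (a * b')%:F * e.
    have bF : b%:F != 0 by rewrite tofrac_eq0.
    have b'F : b'%:F != 0 by rewrite tofrac_eq0.
    by rewrite ex ee !tofracM [LHS]mulrC [LHS]mulrA divfK // [RHS]mulrCA mulfK // mulrC.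
  exact: DmodM EDmod he.
case: (classic (star_f star I 1)) => h1; last first.
  case: (qm_exists Hs Iid nzI h1) => P [HP sIP].
  case: (gm_denom (qm_Dmod HP) (qm_prime Hs HP) (qm_proper HP) EDmod (hx P HP)) => s [hs hsx].
  by case: hs; apply: sIP; split=> //; exists s.
case/sfE: h1 => l [nl [sl h1]].
have hl : forall i, (i < size l)%N -> I l`_i by move=> i hi; apply: sl; apply: fg_in.
pose s := \poly_(i < size l) emb1 l`_i : {poly K1 D}.
have hS : S1 star s%:F.
  split.
    apply/polyY_eq => i; rewrite coef_poly; case: ltnP => hi; last exact: inD1_0.
    by apply: inD1_emb1; exact: (hl i hi).1.
  move=> Q [HQ hQ] /polyY_eq hq.
  have hc : forall i, (i < size l)%N -> contr Q l`_i.
    move=> i hi; split; first exact: (hl i hi).1.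
    by have := hq i; rewrite coef_poly hi.
  case: hQ => [h0|[_ [hsub hneq]]].
    case: (fg_nz nl) => i [hi ni]; by rewrite (h0 _ (hc i hi)) eqxx in ni.
  have cD : is_Dmod (contr Q).
    split; first by split; [exact: inD0|rewrite emb10; exact: pr0].
    split.
      move=> u v [hu1 hu2] [hv1 hv2]; split; first exact: inDD.
      by rewrite emb1D; exact: prD.
    move=> d u [hu1 hu2]; split; first by apply: inDM => //; exists d.
    by rewrite emb1M; apply: prM => //; apply: inD1_emb1; exists d.
  have sub : subs (fg_span l) (contr Q) by apply: fg_sub.
  apply: hneq => y; split; first exact: hsub.
  apply: (sf_one Hs cD); apply/sfE; exists l; split=> //.
have s0 := S1_nz hS.
exists (size l), (fun i => emb2 (emb1 (l`_i * x))), (fun i => (('X^i : {poly K1 D})%:F) / s%:F).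
split; first by move=> i; exists (l`_i * x); split=> //; exact: (hl i (ltn_ord i)).2.
split.
  move=> i; exists ('X^i)%:F, s%:F; split; last by split.
  by apply/polyY_eq => j; rewrite coefXn; case: eqP => _; [exact: inD1_1|exact: inD1_0].
have es : s%:F = \sum_(i < size l) emb2 (emb1 l`_i) * ('X^i)%:F.
  rewrite /s poly_def (big_morph _ (@tofracD _) (@tofrac0 _)); apply: eq_bigr => i _.
  by rewrite /emb2 -tofracM mul_polyC.
clearbody s.
rewrite (eq_bigr (fun i : 'I_(size l) => emb2 (emb1 (l`_i * x)) * ('X^i)%:F / s%:F)); last first.
  by move=> i _; rewrite mulrA.
rewrite -mulr_suml.
have -> : \sum_(i < size l) emb2 (emb1 (l`_i * x)) * ('X^i)%:F = emb2 (emb1 x) * s%:F.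
  rewrite es; symmetry; apply: etrans; first exact: mulr_sumr.
  apply: eq_bigr => i _.
  rewrite emb1M emb2M.
  move: (emb2 (emb1 l`_i)) (emb2 (emb1 x)) (('X^i : {poly K1 D})%:F) => u v w.
  by rewrite mulrA [v * u]mulrC.
exact: (esym (mulfK s0 _)).
Qed.
Local Notation GM := (gen_mod (locY star) (img (fun e => emb2 (emb1 e)) E)).

Lemma gm_conv z : gen_mod (locY star) (img (@emb2 D) (gen_mod (@inD1 D) (img (@emb1 D) E))) z <-> GM z.
Proof.
split.
  have key : forall g, gen_mod (@inD1 D) (img (@emb1 D) E) g -> forall a, locY star a -> GM (emb2 g * a).
    move=> g; apply: (gm_ind (S := fun g => forall a, locY star a -> GM (emb2 g * a))).
    - by move=> a _; rewrite emb20 mul0r; exact: gm0.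
    - by move=> u v hu hv a ha; rewrite emb2D mulrDl; apply: gmD; [apply: hu|apply: hv].
    - move=> w d [e [he ->]] hd a ha; rewrite emb2M.
      have hl := locY_mul ha hd.
      move: (emb2 d) hl => v hl.
      rewrite -mulrA [v * a]mulrC; apply: gm_base => //; by exists e.
  apply: (gm_ind (S := GM)); [exact: gm0|move=> u v; exact: gmD|].
  by move=> w a [g [hg ->]] ha; apply: key.
apply: gm_mono => // w [e [he ->]]; exists (emb1 e); split=> //.
rewrite -[emb1 e]mulr1; apply: gm_base; [by exists e|exact: inD1_1].
Qed.

Lemma main_thm :
  (forall x : KK D,
     (bracket star (gen_mod (@inD1 D) (img (@emb1 D) E)) (emb1 x) <->
      gen_mod (locY star) (img (fun e => emb2 (emb1 e)) E) (emb2 (emb1 x))) /\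
     (gen_mod (locY star) (img (fun e => emb2 (emb1 e)) E) (emb2 (emb1 x)) <->
      star_tilde star E x)) /\
  (forall f : K1 D,
     bracket star (gen_mod (@inD1 D) (img (@emb1 D) E)) f <->
     gen_mod (@inD1 D) (img (@emb1 D) (star_tilde star E)) f).
Proof.
split.
  move=> x; split; first exact: gm_conv.
  split; last exact: coreZ.
  move=> /coreX [p [ep hp]].
  have epx : p = x%:P by apply: tofrac_inj; rewrite -ep.
  by have := hp 0%N; rewrite epx coefC.
move=> f; split.
  move=> /gm_conv /coreX [p [-> hp]].
  exists (size p), (fun i => emb1 p`_i), (fun i => (('X^i : {poly K}))%:F).
  split; first by move=> i; exists p`_i.
  split.
    move=> i; exists 'X^i; split=> // j; rewrite coefXn.
    by case: eqP => _; [exact: inD_1|exact: inD0].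
  rewrite -{1}(coefK p) poly_def (big_morph _ (@tofracD _) (@tofrac0 _)); apply: eq_bigr => i _.
  by rewrite /emb1 -tofracM mul_polyC.
move=> hf; apply/gm_conv.
apply: (gm_ind (S := fun g => GM (emb2 g))) hf.
- by rewrite emb20; exact: gm0.
- by move=> u v hu hv; rewrite emb2D; apply: gmD.
- move=> w d [y [hy ->]] hd; rewrite emb2M.
  by apply: gm_mulr (coreZ hy) => a ha; apply: locY_mul.
Qed.

End Main.

Theorem theorem2p3 (D : idomainType) (star : (KK D -> Prop) -> (KK D -> Prop))
  (Hstar : semistar star) (E : KK D -> Prop) (HE : Fbar E) :
  (* (c) *)
  (forall x : KK D,
     (bracket star (gen_mod (@inD1 D) (img (@emb1 D) E)) (emb1 x) <->
      gen_mod (locY star) (img (fun e => emb2 (emb1 e)) E) (emb2 (emb1 x))) /\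
     (gen_mod (locY star) (img (fun e => emb2 (emb1 e)) E) (emb2 (emb1 x)) <->
      star_tilde star E x)) /\
  (* (d) *)
  (forall f : K1 D,
     bracket star (gen_mod (@inD1 D) (img (@emb1 D) E)) f <->
     gen_mod (@inD1 D) (img (@emb1 D) (star_tilde star E)) f).
Proof. exact: (main_thm Hstar HE). Qed.
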